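(* Let $(X,\sigma,T)$ be as in the context and suppose it has no extra spectrum. Let $\pi^L_{eq}:L\to L_{eq}$ be the maximal equicontinuous factor of $(L,\sigma_L)$ (neutral element $e_{eq}=\pi^L_{eq}(e)$), and let $\eta_0:L_{eq}\to X_{eq}$ be the factor map with $\tilde\pi_{eq}=\eta_0\circ\pi^L_{eq}$. Then $\eta_0$ is bijective and $L^{fib}=(\pi^L_{eq})^{-1}(e_{eq})$.
   Context: $T$ is an abelian group acting continuously by $\sigma$ on a compact Hausdorff space $X$; the action is minimal and not distal. $E(X)$ is the Ellis semigroup (closure of $\{\sigma^t\}$ in $X^X$ with pointwise topology), with $T$-action $\sigma_E^t(f)=\sigma^t\circ f$. $\pi_{eq}:X\to X_{eq}$ is the maximal equicontinuous factor; $X_{eq}$ is a compact abelian group with neutral element $0$ a singular point (a point whose fibre contains two distinct proximal points). Fix a minimal idempotent $e$, $L=E(X)e$, $\sigma_L$ the restriction of $\sigma_E$ to $L$, $\mathcal G=eL$. $\tilde\pi_{eq}:L\to X_{eq}$, $\tilde\pi_{eq}(f)=\pi_{eq}(f(x))-\pi_{eq}(x)$ (independent of $x$); it is an equicontinuous factor of $(L,\sigma_L)$. $L^{fib}=\{f\in L:\tilde\pi_{eq}(f)=0\}$, $\mathcal G^{fib}=\mathcal G\cap L^{fib}$. The little structure group $\Gamma\subset\mathcal G$ is generated by the entries of the sandwich matrix of a Rees matrix representation of the kernel of $E(X)$. For a subgroup $H$ of a right-topological group $G$, $\overline{\mathrm{ncl}_G(H)}$ is the topological closure of the smallest normal subgroup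 of $G$ containing $H$. The system has no extra spectrum (NES) if $\overline{\mathrm{ncl}_{\mathcal G}(\Gamma)}=\mathcal G^{fib}$. *)

(* Defs.v *)
From HB Require Import structures.
From mathcomp Require Import all_boot all_order all_algebra.
From mathcomp Require Import all_classical all_reals all_analysis.
Set Implicit Arguments. Unset Strict Implicit. Unset Printing Implicit Defensive.
Import Order.TTheory GRing.Theory Num.Theory.
Local Open Scope classical_set_scope.
Local Open Scope ring_scope.

Definition is_action (T : zmodType) (Y : Type) (rho : T -> Y -> Y) :=
  (forall y, rho 0 y = y) /\ (forall s t y, rho (s + t) y = rho s (rho t y)).

Definition eq_system (T : zmodType) (Y : uniformType) (rho : T -> Y -> Y) :=
  [/\ compact [set: Y], hausdorff_space Y, is_action rho,
      (forall t, continuous (rho t)) &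
      (forall U, entourage U -> exists2 V, entourage V &
         forall y z, V (y, z) -> forall t, U (rho t y, rho t z))].

(** p : A -> Y (A an invariant subset of Z, with the subspace topology)
    is a factor map from (A, act) onto (Y, rho). *)
Definition is_factor (T : zmodType) (Z : topologicalType) (A : set Z)
    (act : T -> Z -> Z) (Y : topologicalType) (rho : T -> Y -> Y)
    (p : Z -> Y) :=
  [/\ {within A, continuous p},
      (forall y, exists2 z, A z & p z = y) &
      (forall t z, A z -> p (act t z) = rho t (p z))].

Definition is_max_eq_factor (T : zmodType) (Z : topologicalType) (A : set Z)
    (act : T -> Z -> Z) (Y : uniformType) (rho : T -> Y -> Y) (p : Z -> Y) :=
  [/\ eq_system rho, is_factor A act rho p &
      forall (Y' : uniformType) (rho' : T -> Y' -> Y') (p' : Z -> Y'),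
        eq_system rho' -> is_factor A act rho' p' ->
        exists h : Y -> Y', continuous h /\ forall z, A z -> p' z = h (p z)].

Section Ellis.
Variables (T : zmodType) (X : topologicalType) (sigma : T -> X -> X).

Definition minimal_system := forall x, closure (range (fun t => sigma t x)) = [set: X].

Definition ellis : set {ptws X -> X} :=
  closure (range (fun t => (sigma t : {ptws X -> X}))).

Definition actE (t : T) (f : {ptws X -> X}) : {ptws X -> X} := sigma t \o f.

Definition proximal (x y : X) := exists2 f, ellis f & f x = f y.
Definition distal_system := forall x y, proximal x y -> x = y.

Definition left_ideal (I : set {ptws X -> X}) :=
  I `<=` ellis /\ forall f g, ellis f -> I g -> I (f \o g).
Definition minimal_left_ideal (I : set {ptws X -> X}) :=
  [/\ left_ideal I, I !=set0 &
      forall J, left_ideal J -> J !=set0 -> J `<=` I -> J = I].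

(** kernel (minimal two-sided ideal) = union of the minimal left ideals *)
Definition ellis_kernel : set {ptws X -> X} :=
  [set f | exists2 I, minimal_left_ideal I & I f].

Definition idempotent (u : {ptws X -> X}) := u \o u = u.

Definition minimal_idempotent (e : {ptws X -> X}) :=
  idempotent e /\ exists2 I, minimal_left_ideal I & I e.

Variable e : {ptws X -> X}.

Definition Lset : set {ptws X -> X} := [set g | exists2 f, ellis f & g = f \o e].
Definition Gset : set {ptws X -> X} := [set g | exists2 f, Lset f & g = e \o f].

(** subgroups / normal subgroups of the group G = eL (neutral element e) *)
Definition G_subgroup (N : set {ptws X -> X}) :=
  [/\ N `<=` Gset, N e, (forall f g, N f -> N g -> N (f \o g)) &
      (forall n h, N n -> Gset h -> h \o n = e -> N h)].
Definition G_normal (N : set {ptws X -> X}) :=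
  G_subgroup N /\
  forall g h n, Gset g -> Gset h -> h \o g = e -> N n -> N (g \o n \o h).
Definition G_gen (S : set {ptws X -> X}) : set {ptws X -> X} :=
  [set f | forall N, G_subgroup N -> S `<=` N -> N f].
Definition G_ncl (S : set {ptws X -> X}) : set {ptws X -> X} :=
  [set f | forall N, G_normal N -> S `<=` N -> N f].

(** Entries of the sandwich matrix of the Rees matrix representation of the
    kernel K normalised at e: p_{lambda,i} = u_lambda v_i with u_lambda the
    idempotent of eK meeting the minimal left ideal lambda, and v_i the
    idempotent of Ke meeting the minimal right ideal i. *)
Definition sandwich_entries : set {ptws X -> X} :=
  [set f | exists u v : {ptws X -> X}, [/\ f = u \o v,
     [/\ ellis_kernel u, idempotent u & e \o u = u] &
     [/\ ellis_kernel v, idempotent v & v \o e = v]]].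

Definition Gamma : set {ptws X -> X} := G_gen sandwich_entries.

Variables (Xeq : zmodType) (pieq : X -> Xeq).

(** L^fib : tilde pi_eq (f) = pi_eq(f x) - pi_eq(x) = 0 *)
Definition Lfib : set {ptws X -> X} :=
  [set f | Lset f /\ forall x, pieq (f x) - pieq x = 0].
Definition Gfib : set {ptws X -> X} := Gset `&` Lfib.

Definition NES := closure (G_ncl Gamma) `&` Gset = Gfib.

Definition singular_point (z : Xeq) :=
  exists x y, [/\ pieq x = z, pieq y = z, x <> y & proximal x y].

End Ellis.

(* Main.v *)
Require Import Defs.
From HB Require Import structures.
From mathcomp Require Import all_boot all_order all_algebra.
From mathcomp Require Import all_classical all_reals all_analysis.
Import Order.TTheory GRing.Theory Num.Theory.
Local Open Scope classical_set_scope.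
Local Open Scope ring_scope.
Set Implicit Arguments. Unset Strict Implicit.

Lemma min_ideal_mul (T : zmodType) (X : topologicalType) (sigma : T -> X -> X)
  (I : set {ptws X -> X}) (m : {ptws X -> X}) :
  minimal_left_ideal sigma I -> I m ->
  I = [set g | exists2 y, I y & g = y \o m].
Proof.
move=> [[IE Il] [x Ix] Imin] Im.
apply/esym; apply: Imin.
- split.
  + by move=> g [y Iy ->]; apply: (IE); apply: (Il) => //; apply: (IE).
  + move=> f g Ef [y Iy ->]; exists (f \o y) => //; exact: Il.
- by exists (x \o m); exists x.
- by move=> g [y Iy ->]; apply: (Il) => //; apply: (IE).
Qed.

Lemma Lset_eq (T : zmodType) (X : topologicalType) (sigma : T -> X -> X)
  (I : set {ptws X -> X}) (e : {ptws X -> X}) :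
  minimal_left_ideal sigma I -> I e -> Lset sigma e = I.
Proof.
move=> mI Ie; have [[IE Il] _ _] := mI.
apply/seteqP; split.
  by move=> g [f Ef ->]; apply: (Il).
move=> g; rewrite (min_ideal_mul mI Ie) => -[y Iy ->].
by exists y => //; apply: (IE).
Qed.

Lemma idem_G (T : zmodType) (X : topologicalType) (sigma : T -> X -> X)
  (I : set {ptws X -> X}) (e w : {ptws X -> X}) :
  minimal_left_ideal sigma I -> I e -> I w -> e \o w = w -> w \o w = w -> w = e.
Proof.
move=> mI Ie Iw ew ww.
have := Ie; rewrite (min_ideal_mul mI Iw) => -[y Iy ye].
have : e \o w = e by rewrite ye; change (y \o (w \o w) = y \o w); rewrite ww.
by rewrite ew.
Qed.
Lemma precomp_cvg (X : topologicalType) (g : X -> X) (k : {ptws X -> X}) :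
  (fun c : {ptws X -> X} => (c \o g : {ptws X -> X})) @ nbhs k --> (k \o g : {ptws X -> X}).
Proof.
apply/cvg_sup => i; apply/cvg_image.
  by rewrite eqEsubset; split => // y _; exists (fun _ => y).
move=> B nB.
have := @proj_continuous X (fun _ => X) (g i) k _ nB.
rewrite nbhs_simpl /= => hB.
exists ((fun f : {ptws X -> X} => f i) @^-1` B).
  exact: hB.
rewrite eqEsubset; split => y.
  by case=> z Bz <-.
move=> By; exists (fun _ => y) => //.
Qed.
Lemma within_pt (X : topologicalType) (Y : uniformType) (A : set {ptws X -> X})
  (p : {ptws X -> X} -> Y) (z : {ptws X -> X}) (W : set (Y * Y)) :
  {within A, continuous p} -> A z -> entourage W ->
  nbhs z [set y | A y -> W (p z, p y)].
Proof.
move=> /subspace_continuousP cp Az eW.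
have := cp z Az _ (nbhs_entourage (p z) eW).
rewrite nbhs_simpl /=; apply: filterS => y /xsectionP; exact.
Qed.

Lemma hclose (Y : uniformType) (a b : Y) : hausdorff_space Y ->
  (forall W, entourage W -> W (a, b)) -> a = b.
Proof.
move=> hY H; apply: close_eq => //.
by rewrite entourage_close.
Qed.

Lemma approx (T : zmodType) (X : topologicalType) (sigma : T -> X -> X)
  (A : set {ptws X -> X}) (Leq : uniformType) (rhoL : T -> Leq -> Leq)
  (piL : {ptws X -> X} -> Leq) (k f g : {ptws X -> X}) (W : set (Leq * Leq)) :
  (forall h f, ellis sigma h -> A f -> A (h \o f)) ->
  {within A, continuous piL} ->
  (forall t f, A f -> piL (actE sigma t f) = rhoL t (piL f)) ->
  ellis sigma k -> A f -> A g -> entourage W ->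
  exists t, W (piL (k \o f), rhoL t (piL f)) /\ W (piL (k \o g), rhoL t (piL g)).
Proof.
move=> hA hpi heq hk Af Ag eW.
have Akf := hA _ _ hk Af; have Akg := hA _ _ hk Ag.
have N1 := within_pt hpi Akf eW; have N2 := within_pt hpi Akg eW.
have M1 : nbhs k [set c : {ptws X -> X} | A (c \o f) -> W (piL (k \o f), piL (c \o f))] := @precomp_cvg _ f k _ N1.
have M2 : nbhs k [set c : {ptws X -> X} | A (c \o g) -> W (piL (k \o g), piL (c \o g))] := @precomp_cvg _ g k _ N2.
have [x [[t _ <-] [/= h1 h2]]] := hk _ (filterI M1 M2).
have st : ellis sigma (sigma t) by apply: subset_closure; exists t.
exists t; rewrite -!heq //; split; [apply: h1 | apply: h2]; exact: hA.
Qed.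

Lemma ent_sym_split (Y : uniformType) (W : set (Y * Y)) : entourage W ->
  exists2 W', entourage W' & forall a b c,
    (W' (c, a) -> W' (c, b) -> W (a, b)) /\ (W' (a, c) -> W' (b, c) -> W (a, b)).
Proof.
move=> eW; exists (split_ent W `&` [set xy | split_ent W (xy.2, xy.1)]).
  exact/entourage_invI/entourage_split_ent.
move=> a b c; split => -[h1 h2] [h3 h4]; exact: (@entourage_split _ c).
Qed.

Lemma P1 (T : zmodType) (X : topologicalType) (sigma : T -> X -> X)
  (A : set {ptws X -> X}) (Leq : uniformType) (rhoL : T -> Leq -> Leq)
  (piL : {ptws X -> X} -> Leq) (k f g : {ptws X -> X}) :
  hausdorff_space Leq ->
  (forall h f, ellis sigma h -> A f -> A (h \o f)) ->
  {within A, continuous piL} ->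
  (forall t f, A f -> piL (actE sigma t f) = rhoL t (piL f)) ->
  ellis sigma k -> A f -> A g -> piL f = piL g -> piL (k \o f) = piL (k \o g).
Proof.
move=> hs hA hpi heq hk Af Ag fg; apply: hclose => // W eW.
have [W' eW' hW'] := ent_sym_split eW.
have [t [h1 h2]] := approx hA hpi heq hk Af Ag eW'.
by apply: (hW' _ _ (rhoL t (piL f))).2 => //; rewrite fg.
Qed.

Lemma P2 (T : zmodType) (X : topologicalType) (sigma : T -> X -> X)
  (A : set {ptws X -> X}) (Leq : uniformType) (rhoL : T -> Leq -> Leq)
  (piL : {ptws X -> X} -> Leq) (k f g : {ptws X -> X}) :
  hausdorff_space Leq -> is_action rhoL ->
  (forall U, entourage U -> exists2 V, entourage V &
         forall y z, V (y, z) -> forall t, U (rhoL t y, rhoL t z)) ->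
  (forall h f, ellis sigma h -> A f -> A (h \o f)) ->
  {within A, continuous piL} ->
  (forall t f, A f -> piL (actE sigma t f) = rhoL t (piL f)) ->
  ellis sigma k -> A f -> A g -> k \o f = k \o g -> piL f = piL g.
Proof.
move=> hs [act0 actD] heqc hA hpi heq hk Af Ag fg; apply: hclose => // W eW.
have [V eV hV] := heqc W eW.
have [W' eW' hW'] := ent_sym_split eV.
have [t [h1 h2]] := approx hA hpi heq hk Af Ag eW'.
rewrite fg in h1.
have := hV _ _ ((hW' _ _ _).1 h1 h2) (- t).
by rewrite -!actD addNr !act0.
Qed.

Lemma right_map (T : zmodType) (X : topologicalType) (sigma : T -> X -> X)
  (A : set {ptws X -> X}) (Leq : uniformType) (rhoL : T -> Leq -> Leq)
  (piL : {ptws X -> X} -> Leq) (m : {ptws X -> X}) :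
  is_max_eq_factor A (actE sigma) rhoL piL ->
  (forall f, A f -> A (f \o m)) ->
  (forall z, A z -> exists2 y, A y & y \o m = z) ->
  exists H : Leq -> Leq, forall f, A f -> piL (f \o m) = H (piL f).
Proof.
move=> [eqs [hpi hsurj heq] hmax] Am hs.
have fac : is_factor A (actE sigma) rhoL (fun f => piL (f \o m)).
  split.
  - apply/subspace_continuousP => x Ax S nS.
    have := (proj1 (subspace_continuousP _ _) hpi) (x \o m) (Am _ Ax) S nS.
    rewrite /= nbhs_simpl /= => h1.
    have h2 : nbhs x [set c : {ptws X -> X} | A (c \o m) -> S (piL (c \o m))]
      := @precomp_cvg _ m x _ h1.
    rewrite nbhs_simpl /=; apply: filterS h2 => c /= h Ac; exact: h (Am _ Ac).
  - move=> y; have [z0 Az0 <-] := hsurj y; have [y0 Ay0 <-] := hs _ Az0.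
    by exists y0.
  - move=> t z Az; rewrite -heq //; exact: Am.
have [H [_ hH]] := hmax _ _ _ eqs fac.
by exists H.
Qed.

Lemma closure_val (X : topologicalType) (Leq : uniformType)
  (A N0 : set {ptws X -> X}) (piL : {ptws X -> X} -> Leq) (b : Leq)
  (n : {ptws X -> X}) :
  hausdorff_space Leq -> {within A, continuous piL} ->
  (forall z, N0 z -> A z /\ piL z = b) -> closure N0 n -> A n -> piL n = b.
Proof.
move=> hs hpi hN cn An; apply: hclose => // W eW.
have [z [/hN [Az <-] /= h]] := cn _ (within_pt hpi An eW).
exact: h.
Qed.

Unset Implicit Arguments.

Theorem mainTheorem3 (T : zmodType) (X : topologicalType) (sigma : T -> X -> X)
    (Xeq : UniformZmodule.type) (tau : T -> Xeq) (pieq : X -> Xeq)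
    (e : {ptws X -> X})
    (Leq : uniformType) (rhoL : T -> Leq -> Leq) (piL : {ptws X -> X} -> Leq)
    (eta0 : Leq -> Xeq) :
  compact [set: X] -> hausdorff_space X ->
  is_action sigma -> (forall t, continuous (sigma t)) ->
  minimal_system sigma -> ~ distal_system sigma ->
  is_max_eq_factor [set: X] sigma (fun t y => y + tau t) pieq ->
  singular_point sigma pieq 0 ->
  minimal_idempotent sigma e ->
  NES sigma e pieq ->
  is_max_eq_factor (Lset sigma e) (actE sigma) rhoL piL ->
  is_factor [set: Leq] rhoL (fun t y => y + tau t) eta0 ->
  (forall f, Lset sigma e f -> forall x, eta0 (piL f) = pieq (f x) - pieq x) ->
  bijective eta0 /\
  Lfib sigma e pieq = Lset sigma e `&` piL @^-1` [set piL e].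
Proof.
move=> _ _ _ _ _ _ _ [x0 _] [He [I mI Ie]] nes maxL [_ etasurj _] htil.
set A := Lset sigma e.
have hAI : A = I := Lset_eq mI Ie.
have [[IE Il] _ _] := mI.
have mA : minimal_left_ideal sigma A by rewrite hAI.
have ellA : forall f, A f -> ellis sigma f by rewrite hAI.
have hA : forall h f, ellis sigma h -> A f -> A (h \o f) by rewrite hAI.
have Ae : A e by rewrite hAI.
have Aright : forall f, A f -> f \o e = f.
  move=> f [g _ ->]; change (g \o (e \o e) = g \o e); by rewrite He.
have Ainv : forall m z, A m -> A z -> exists2 y, A y & y \o m = z.
  move=> m z Am Az; move: (Az); rewrite {1}(min_ideal_mul mA Am) => -[y Ay yz]; by exists y.
have idemG : forall w, A w -> e \o w = w -> w \o w = w -> w = e.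
  move=> w; exact: (idem_G mA Ae).
have maxL' := maxL.
move: maxL' => [[_ hsL [act0 actD] _ eqcL] [hpi hsurj heq] _].
have P1' : forall k f g, ellis sigma k -> A f -> A g -> piL f = piL g ->
    piL (k \o f) = piL (k \o g).
  move=> k f g; exact: P1 hsL hA hpi heq.
have P2' : forall k f g, ellis sigma k -> A f -> A g -> k \o f = k \o g ->
    piL f = piL g.
  move=> k f g; exact: P2 hsL (conj act0 actD) eqcL hA hpi heq.
have R : forall m a b, A m -> A a -> A b -> piL a = piL b ->
    piL (a \o m) = piL (b \o m).
  move=> m a b Am Aa Ab ab.
  have [H hH] := right_map maxL (fun f Af => hA _ _ (ellA _ Af) Am)
    (fun z Az => Ainv _ _ Am Az).
  by rewrite !hH // ab.
have hGset : forall g, Gset sigma e g -> A g /\ e \o g = g.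
  move=> g [f Af ->]; split; first exact: hA (ellA _ Ae) Af.
  change ((e \o e) \o f = e \o f); by rewrite He.
have Gset_of : forall g, A g -> e \o g = g -> Gset sigma e g.
  by move=> g Ag eg; exists g.
set ti := fun f => eta0 (piL f).
have ti_comp : forall f g, A f -> A g -> ti (f \o g) = ti f + ti g.
  move=> f g Af Ag; rewrite /ti (htil _ (hA _ _ (ellA _ Af) Ag) x0).
  rewrite (htil _ Af (g x0)) (htil _ Ag x0) /=.
  by rewrite addrA subrK.
have ti_e : ti e = 0.
  have := ti_comp _ _ Ae Ae; rewrite He -[X in X = _]addr0.
  by move/addrI.
set N := [set n | Gset sigma e n /\ piL n = piL e].
have NG : G_normal sigma e N.
  split; first split.
  - by move=> n [].
  - by split => //; apply: Gset_of => //.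
  - move=> n m [/hGset [An en] pn] [/hGset [Am em] pm]; split.
      apply: Gset_of; first exact: hA (ellA _ An) Am.
      by change ((e \o n) \o m = n \o m); rewrite en.
    rewrite (P1' n m e (ellA _ An) Am Ae pm) Aright //.
  - move=> n h [/hGset [An en] pn] Gh hn; split => //.
    have [Ah eh] := hGset _ Gh.
    have := P1' h n e (ellA _ Ah) An Ae pn.
    by rewrite hn Aright.
  - move=> g h n Gg Gh hg [/hGset [An en] pn].
    have [Ag eg] := hGset _ Gg; have [Ah eh] := hGset _ Gh.
    have Agn : A (g \o n) := hA _ _ (ellA _ Ag) An.
    split.
      apply: Gset_of; first exact: hA (ellA _ Agn) Ah.
      by change (((e \o g) \o n) \o h = (g \o n) \o h); rewrite eg.
    have gh : g \o h = e.
      apply: idemG; first exact: hA (ellA _ Ag) Ah.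
        by change ((e \o g) \o h = g \o h); rewrite eg.
      change (g \o (h \o g) \o h = g \o h); rewrite hg.
      by rewrite (Aright _ Ag).
    have pgn : piL (g \o n) = piL g.
      by rewrite (P1' g n e (ellA _ Ag) An Ae pn) Aright.
    by rewrite (R h (g \o n) g Ah Agn Ag pgn) gh.
have sandN : sandwich_entries sigma e `<=` N.
  move=> p [u [v [-> [[Iu Ku Iuu] uu eu] [[Iv Kv Ivv] vv ve]]]].
  have Eu : ellis sigma u by have [[IE' _] _ _] := Ku; apply: IE'.
  have Ev : ellis sigma v by have [[IE' _] _ _] := Kv; apply: IE'.
  have Av : A v by exists v.
  have Auv : A (u \o v) := hA _ _ Eu Av.
  split.
    apply: Gset_of => //.
    by change ((e \o u) \o v = u \o v); rewrite eu.
  have ev : e \o v = e.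
    apply: idemG; first exact: hA (ellA _ Ae) Av.
      by change ((e \o e) \o v = e \o v); rewrite He.
    change (e \o (v \o e) \o v = e \o v); rewrite ve.
    by change (e \o (v \o v) = e \o v); rewrite vv.
  have ue : u \o e = e.
    apply: idemG; first exact: hA Eu Ae.
      by change ((e \o u) \o e = u \o e); rewrite eu.
    change (u \o (e \o u) \o e = u \o e); rewrite eu.
    by change ((u \o u) \o e = u \o e); rewrite uu.
  have pv : piL v = piL e.
    by apply: (P2' e v e (ellA _ Ae) Av Ae); rewrite ev He.
  by rewrite (P1' u v e Eu Av Ae pv) ue.
have GammaN : Gamma sigma e `<=` N.
  move=> f Gf; apply: Gf => //; exact: NG.1.
have fibN : forall n, Gfib sigma e pieq n -> piL n = piL e.
  move=> n Fn; move: (Fn); rewrite -nes => -[cn Gn].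
  have [An _] := hGset _ Gn.
  apply: (closure_val hsL hpi _ cn An) => z nz.
  have [/hGset [Az _] pz] := nz N NG GammaN.
  by [].
have inj_eta : injective eta0.
  move=> a b hab.
  have [f Af fa] := hsurj a; have [g Ag gb] := hsurj b; subst a b.
  have ee : forall h, A h -> piL (e \o h) = piL h /\ A (e \o h).
    move=> h Ah; have Aeh := hA _ _ (ellA _ Ae) Ah; split => //.
    by apply: (P2' e (e \o h) h (ellA _ Ae) Aeh Ah); change ((e \o e) \o h = e \o h); rewrite He.
  have [pf1 Af1] := ee _ Af; have [pg1 Ag1] := ee _ Ag.
  set f1 := e \o f in pf1 Af1; set g1 := e \o g in pg1 Ag1.
  have [y Ay yg] := Ainv g1 e Ag1 Ae.
  set g' := e \o y.
  have Ag' : A g' := hA _ _ (ellA _ Ae) Ay.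
  have g'g : g' \o g1 = e.
    by change (e \o (y \o g1) = e); rewrite yg He.
  set n := f1 \o g'.
  have An : A n := hA _ _ (ellA _ Af1) Ag'.
  have tn : ti n = 0.
    rewrite /n ti_comp //.
    have := ti_comp _ _ Ag' Ag1; rewrite g'g ti_e => h0.
    have : ti f1 = ti g1 by rewrite /ti pf1 pg1.
    move=> ->; by rewrite addrC -h0.
  have Fn : Gfib sigma e pieq n.
    split.
      apply: Gset_of => //.
      by change (((e \o e) \o f) \o g' = (e \o f) \o g'); rewrite He.
    by split => // x; rewrite -(htil _ An x).
  have pn := fibN _ Fn.
  have f1n : f1 = n \o g1.
    by change (f1 = f1 \o (g' \o g1)); rewrite g'g Aright.
  have h1 : piL (n \o g1) = piL (e \o g1) := R g1 n e Ag1 An Ae pn.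
  have eg1 : e \o g1 = g1 by change ((e \o e) \o g = e \o g); rewrite He.
  rewrite eg1 -f1n in h1.
  by rewrite -pf1 -pg1 h1.
split.
  have hs : forall y, {x | eta0 x = y}.
    move=> y; apply: cid; have [x _ <-] := etasurj y; by exists x.
  exists (fun y => proj1_sig (hs y)).
    move=> x; apply: inj_eta; exact: proj2_sig (hs (eta0 x)).
  move=> y; exact: proj2_sig (hs y).
apply/seteqP; split.
  move=> f [Af hf]; split => //=.
  apply: inj_eta; rewrite (htil _ Af x0) hf.
  by have := ti_e; rewrite /ti => ->.
move=> f [Af /= pf]; split => // x.
by rewrite -(htil _ Af x) pf; have := ti_e; rewrite /ti.
Qed.
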